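(* Let $M$ be an $m\times n$ $0/1$-matrix. Let $B_v$ and $B_w$ be two blocks of $M$ each consisting of all $m$ rows, where $B_v$ consists of columns $s_1,\ldots,s_2$ and $B_w$ of columns $s_2,\ldots,s_3$ (so they share exactly column $s_2$), and let $B_y$ be the block consisting of all rows and columns $s_1,\ldots,s_3$. Given $\bar{\Phi}(B_v)$ and $\bar{\Phi}(B_w)$, the data structure $\bar{\Phi}(B_y)$ can be computed in $O(m)$ time.
   Context: Entries of $M$ are indexed $(a,b)$, rows increasing from bottom to top, columns left to right. A path from $(k,l)$ to $(i,j)$ is a sequence of $1$-entries starting at $(k,l)$ and ending at $(i,j)$ in which each step goes from $(a,b)$ to $(a+1,b)$, $(a,b+1)$ or $(a+1,b+1)$; $(i,j)$ is reachable from $(k,l)$ if such a path exists. For a block $B$ (submatrix of contiguous rows and columns $s^-\le b\le s^+$), its left vertical boundary $\bar{B}^-$ is the set of entries of column $s^-$ in $B$ and its right vertical boundary $\bar{B}^+$ the set of entries of column $s^+$ in $B$, each ordered by increasing row. The data structure $\bar{\Phi}(B)$ stores: (1) for each $1$-entry $i$ of $\bar{B}^-$, the first entry $\bar{\sigma}_A(i)$ and the last entry $\bar{\sigma}_Z(i)$ of $\bar{B}^+$ reachable from $i$; (2) for each $1$-entry $j$ of $\bar{B}^+$, a flag $\bar{f}(j)$ indicating whether $j$ is reachable from some entry of $\bar{B}^-$, a list $\bar{L}_A(j)$ of the $1$-entries $i\in\bar{B}^-$ with $\bar{\sigma}_A(i)=j$, and a list $\bar{L}_Z(j)$ of the $1$-entries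 $i\in\bar{B}^-$ with $\bar{\sigma}_Z(i)=j$. Running time is in the RAM model. *)

(* Defs.v *)
From Stdlib Require Import Arith List.
Import ListNotations.

(* M : nat -> nat -> bool, entry (a,b) = M a b (row a, column b);       *)
(* rows 0..m-1 (increasing bottom to top), columns 0..n-1.             *)
Inductive reach (M : nat -> nat -> bool) (m n : nat)
  : nat -> nat -> nat -> nat -> Prop :=
| reach_refl a b :
    a < m -> b < n -> M a b = true -> reach M m n a b a b
| reach_step a b a' b' c d :
    a < m -> b < n -> M a b = true ->
    ((a' = S a /\ b' = b) \/ (a' = a /\ b' = S b) \/ (a' = S a /\ b' = S b)) ->
    reach M m n a' b' c d -> reach M m n a b c d.

(* For the block of all rows and columns lo..hi (lo <= hi), a path from
   column lo to column hi stays within columns lo..hi (steps are monotone),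
   so reachability inside the block is reach with those endpoints. *)

Definition SigmaA M m n lo hi (i j : nat) : Prop :=
  j < m /\ reach M m n i lo j hi /\
  (forall j', j' < j -> ~ reach M m n i lo j' hi).

Definition SigmaZ M m n lo hi (i j : nat) : Prop :=
  j < m /\ reach M m n i lo j hi /\
  (forall j', j < j' -> j' < m -> ~ reach M m n i lo j' hi).

(* Unit-cost RAM (word RAM with unbounded words, +, truncated -,        *)
(* indirect addressing, conditional jump).  Memory: nat -> nat.         *)
Inductive instr : Type :=
| IConst (d k : nat)
| IAdd (d a b : nat)
| ISub (d a b : nat)
| ILoad (d a : nat)
| IStore (a b : nat)
| IJz (a l : nat)
| IJmp (l : nat)
| IHalt.

Definition memory := nat -> nat.
Definition state := (nat * memory)%type.

Definition upd (mem : memory) (a v : nat) : memory :=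
  fun x => if Nat.eqb x a then v else mem x.

(* one step, costing one time unit; None if halted or crashed *)
Definition step (P : list instr) (st : state) : option state :=
  let (pc, mem) := st in
  match nth_error P pc with
  | Some (IConst d k) => Some (S pc, upd mem d k)
  | Some (IAdd d a b) => Some (S pc, upd mem d (mem a + mem b))
  | Some (ISub d a b) => Some (S pc, upd mem d (mem a - mem b))
  | Some (ILoad d a) => Some (S pc, upd mem d (mem (mem a)))
  | Some (IStore a b) => Some (S pc, upd mem (mem a) (mem b))
  | Some (IJz a l) => Some (if Nat.eqb (mem a) 0 then l else S pc, mem)
  | Some (IJmp l) => Some (l, mem)
  | Some IHalt => None
  | None => None
  end.

Fixpoint run (P : list instr) (t : nat) (st : state) : option state :=
  match t with
  | 0 => Some st
  | S t' => match step P st with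
            | Some st' => run P t' st'
            | None => None
            end
  end.

Definition halts_in (P : list instr) (mem0 : memory) (t : nat) (mem' : memory)
  : Prop :=
  exists pc, run P t (0, mem0) = Some (pc, mem') /\ nth_error P pc = Some IHalt.

(* Memory encoding of Phibar(B) for the block B = all m rows, columns   *)
(* lo..hi, stored from base address p: 7 cells per row r < m:           *)
(*   p+7r   : sigma_A(r) + 1, or 0 if undefined                         *)
(*   p+7r+1 : sigma_Z(r) + 1, or 0 if undefined                         *)
(*   p+7r+2 : flag fbar(r) (1 = reachable from left boundary, else 0)  *)
(*   p+7r+3 : head pointer of list L_A(r)   (0 = nil, i+1 = node i)     *)
(*   p+7r+4 : head pointer of list L_Z(r)                               *)
(*   p+7r+5 : next pointer of node r in its L_A list                    *)
(*   p+7r+6 : next pointer of node r in its L_Z list                    *)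
(* Lists may be in any order.                                           *)
Inductive LList (mem : memory) (m p off : nat) : nat -> list nat -> Prop :=
| LL_nil : LList mem m p off 0 []
| LL_cons i s : i < m ->
    LList mem m p off (mem (p + 7 * i + off)) s ->
    LList mem m p off (S i) (i :: s).

Definition OptEnc (R : nat -> Prop) (v : nat) : Prop :=
  (v = 0 /\ forall j, ~ R j) \/ (exists j, v = S j /\ R j).

Definition ListEnc (mem : memory) (m p off head : nat) (Q : nat -> Prop) : Prop :=
  exists s, LList mem m p off (mem head) s /\ NoDup s /\
            forall i, In i s <-> Q i.

Definition EncPhi (mem : memory) (p : nat)
  (M : nat -> nat -> bool) (m n lo hi : nat) : Prop :=
  forall r, r < m ->
    OptEnc (SigmaA M m n lo hi r) (mem (p + 7 * r)) /\
    OptEnc (SigmaZ M m n lo hi r) (mem (p + 7 * r + 1)) /\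
    ((mem (p + 7 * r + 2) = 1 /\ exists i, i < m /\ reach M m n i lo r hi) \/
     (mem (p + 7 * r + 2) = 0 /\ ~ exists i, i < m /\ reach M m n i lo r hi)) /\
    ListEnc mem m p 5 (p + 7 * r + 3)
      (fun i => i < m /\ M i lo = true /\ SigmaA M m n lo hi i r) /\
    ListEnc mem m p 6 (p + 7 * r + 4)
      (fun i => i < m /\ M i lo = true /\ SigmaZ M m n lo hi i r).

(* Main.v *)
Require Import Defs.
From Stdlib Require Import Arith Bool List Lia Classical FunctionalExtensionality.
Import ListNotations.

Lemma reach_props M m n a b c d : reach M m n a b c d ->
  a <= c /\ b <= d /\ a < m /\ b < n /\ M a b = true /\ c < m /\ d < n /\ M c d = true.
Proof.
  induction 1 as [a b Ha Hb HM|a b a' b' c d Ha Hb HM Hs Hr IH]; [repeat split; auto; lia|].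
  destruct IH as (?&?&?&?&?&?&?&?). repeat split; try lia; auto.
Qed.

Lemma reach_trans M m n a b c d e f : reach M m n a b c d -> reach M m n c d e f -> reach M m n a b e f.
Proof.
  induction 1; intros HH; auto. eapply reach_step; eauto.
Qed.

Lemma reach_split M m n a b c d s : reach M m n a b c d -> b <= s <= d ->
  exists x, reach M m n a b x s /\ reach M m n x s c d.
Proof.
  induction 1 as [a b Ha Hb HM|a b a' b' c d Ha Hb HM Hs Hr IH]; intros Hbs.
  - assert (s = b) by lia; subst. exists a. split; constructor; auto.
  - destruct (Nat.eq_dec s b) as [->|Hne].
    + exists a. split; [constructor; auto| eapply reach_step; eauto].
    + pose proof (reach_props _ _ _ _ _ _ _ Hr).
      destruct IH as [x [H1 H2]]; [lia|]. exists x; split; auto. eapply reach_step; eauto.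
Qed.

Lemma cross_gen M m n hi : forall N a1 b1 a2 b2 j1 j2,
  (j1 - a1) + (hi - b1) + (j2 - a2) + (hi - b2) <= N ->
  reach M m n a1 b1 j1 hi -> reach M m n a2 b2 j2 hi ->
  b2 <= b1 <= S b2 -> a1 <= a2 -> j2 <= j1 ->
  exists x y, reach M m n a1 b1 x y /\ reach M m n x y j1 hi /\
              reach M m n a2 b2 x y /\ reach M m n x y j2 hi.
Proof.
  induction N; intros a1 b1 a2 b2 j1 j2 HN H1 H2 Hb Ha Hj;
  pose proof (reach_props _ _ _ _ _ _ _ H1) as P1;
  pose proof (reach_props _ _ _ _ _ _ _ H2) as P2.
  - assert (a1 = j1 /\ b1 = hi /\ a2 = j2 /\ b2 = hi) by lia.
    destruct H as (->&->&->&->). exists j1, hi. assert (j1 = j2) by lia. subst.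
    repeat split; auto.
  - destruct (Nat.eq_dec b1 b2) as [Eb|Eb].
    + subst b2. destruct (Nat.eq_dec a1 a2) as [->|Ea].
      * exists a2, b1. repeat split; auto; constructor; tauto.
      * inversion H1 as [|? ? a' b' ? ? ? ? ? Hs H7]; subst.
        -- lia.
        -- pose proof (reach_props _ _ _ _ _ _ _ H7).
           destruct (IHN a' b' a2 b1 j1 j2) as (x&y&Q1&Q2&Q3&Q4); auto; try lia.
           exists x, y. repeat split; auto. eapply reach_step; eauto.
    + assert (b1 = S b2) by lia. subst b1. inversion H2 as [|? ? a' b' ? ? ? ? ? Hs H7]; subst.
      * lia.
      * pose proof (reach_props _ _ _ _ _ _ _ H7).
        destruct (IHN a1 (S b2) a' b' j1 j2) as (x&y&Q1&Q2&Q3&Q4); auto; try lia.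
        exists x, y. repeat split; auto. eapply reach_step; eauto.
Qed.

Lemma cross M m n lo hi i1 i2 j1 j2 :
  reach M m n i1 lo j1 hi -> reach M m n i2 lo j2 hi -> i1 <= i2 -> j2 <= j1 ->
  reach M m n i1 lo j2 hi /\ reach M m n i2 lo j1 hi.
Proof.
  intros H1 H2 Hi Hj.
  destruct (cross_gen M m n hi _ i1 lo i2 lo j1 j2 (le_n _) H1 H2) as (x&y&Q1&Q2&Q3&Q4); try lia.
  split; eapply reach_trans; eauto.
Qed.

Lemma SigmaA_unique M m n lo hi i j j' : SigmaA M m n lo hi i j -> SigmaA M m n lo hi i j' -> j = j'.
Proof.
  intros (H1&H2&H3) (H1'&H2'&H3').
  destruct (lt_eq_lt_dec j j') as [[H|H]|H]; auto; exfalso; [eapply H3'|eapply H3]; eauto.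
Qed.

Lemma SigmaZ_unique M m n lo hi i j j' : SigmaZ M m n lo hi i j -> SigmaZ M m n lo hi i j' -> j = j'.
Proof.
  intros (H1&H2&H3) (H1'&H2'&H3').
  destruct (lt_eq_lt_dec j j') as [[H|H]|H]; auto; exfalso; [eapply H3|eapply H3']; eauto.
Qed.

Lemma exists_min (P : nat -> Prop) : forall N, (exists j, j <= N /\ P j) ->
  exists j, P j /\ forall j', j' < j -> ~ P j'.
Proof.
  induction N; intros [j [Hj HP]].
  - exists j. split; auto. intros; lia.
  - destruct (classic (exists j, j <= N /\ P j)) as [Hc|Hc]; [apply IHN; auto|].
    exists j. split; auto. intros j' Hj' HP'. apply Hc. exists j'. split; auto.
    assert (j' <= N \/ j' = S N) as [|] by lia; auto. subst. lia.
Qed.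

Lemma exists_max (P : nat -> Prop) : forall N, (exists j, j < N /\ P j) ->
  exists j, j < N /\ P j /\ forall j', j < j' -> j' < N -> ~ P j'.
Proof.
  induction N; intros [j [Hj HP]]; [lia|].
  destruct (classic (P N)) as [Hc|Hc].
  - exists N. repeat split; auto. intros; lia.
  - destruct (IHN) as [k (Hk1&Hk2&Hk3)].
    + exists j. split; auto. assert (j <> N) by (intro; subst; auto). lia.
    + exists k. repeat split; auto. intros j' H1 H2 HP'.
      assert (j' < N \/ j' = N) as [|] by lia; [eapply Hk3; eauto| subst; auto].
Qed.

Lemma sigmaA_exists M m n lo hi i j : reach M m n i lo j hi -> exists j0, SigmaA M m n lo hi i j0.
Proof.
  intros H. destruct (exists_min (fun j => reach M m n i lo j hi) j) as [j0 [H1 H2]]; eauto.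
  exists j0. pose proof (reach_props _ _ _ _ _ _ _ H1). split; [lia|split]; auto.
Qed.

Lemma sigmaZ_exists M m n lo hi i j : reach M m n i lo j hi -> exists j0, SigmaZ M m n lo hi i j0.
Proof.
  intros H. pose proof (reach_props _ _ _ _ _ _ _ H).
  destruct (exists_max (fun j => reach M m n i lo j hi) m) as [j0 (H1&H2&H3)].
  { exists j. split; [lia|auto]. }
  exists j0. split; auto.
Qed.

Lemma interval_reach M m n lo hi i a b k i' : SigmaA M m n lo hi i a -> SigmaZ M m n lo hi i b ->
  a <= k <= b -> reach M m n i' lo k hi -> reach M m n i lo k hi.
Proof.
  intros (_&Ha&_) (_&Hb&_) Hk H'.
  destruct (le_lt_dec i' i).
  - apply (cross _ _ _ _ _ _ _ _ _ H' Ha); lia.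
  - apply (cross _ _ _ _ _ _ _ _ _ Hb H'); lia.
Qed.

Lemma reach_interval M m n lo hi i a b k : SigmaA M m n lo hi i a -> SigmaZ M m n lo hi i b ->
  reach M m n i lo k hi -> a <= k <= b.
Proof.
  intros (_&_&Ha) (_&_&Hb) H. pose proof (reach_props _ _ _ _ _ _ _ H).
  split; [destruct (le_lt_dec a k); auto; exfalso; eapply Ha; eauto
         |destruct (le_lt_dec k b); auto; exfalso; eapply Hb; eauto; lia].
Qed.

Lemma compose M m n s1 s2 s3 i j : s1 <= s2 -> s2 <= s3 ->
  (reach M m n i s1 j s3 <-> exists k, reach M m n i s1 k s2 /\ reach M m n k s2 j s3).
Proof.
  intros H1 H2. split.
  - intros H. apply reach_split; auto.
  - intros [k [Ha Hb]]. eapply reach_trans; eauto.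
Qed.


Lemma enc_A0 mem p M m n lo hi r : EncPhi mem p M m n lo hi -> r < m ->
  mem (p + 7 * r) = 0 -> forall j, ~ reach M m n r lo j hi.
Proof.
  intros HE Hr H0 j Hj. destruct (HE r Hr) as [HA _].
  destruct (sigmaA_exists _ _ _ _ _ _ _ Hj) as [j0 Hj0].
  destruct HA as [[_ HA]|[x [Hx _]]]; [eapply HA; eauto| lia].
Qed.

Lemma enc_AS mem p M m n lo hi r a : EncPhi mem p M m n lo hi -> r < m ->
  mem (p + 7 * r) = S a -> SigmaA M m n lo hi r a.
Proof.
  intros HE Hr H0. destruct (HE r Hr) as [HA _].
  destruct HA as [[HA _]|[x [Hx HA]]]; [lia|]. rewrite H0 in Hx. injection Hx; intros; subst; auto.
Qed.

Lemma enc_ZS mem p M m n lo hi r a : EncPhi mem p M m n lo hi -> r < m ->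
  mem (p + 7 * r + 1) = S a -> SigmaZ M m n lo hi r a.
Proof.
  intros HE Hr H0. destruct (HE r Hr) as [_ [HA _]].
  destruct HA as [[HA _]|[x [Hx HA]]]; [lia|]. rewrite H0 in Hx. injection Hx; intros; subst; auto.
Qed.

Lemma enc_A_ex mem p M m n lo hi r j : EncPhi mem p M m n lo hi -> r < m ->
  reach M m n r lo j hi -> exists a, mem (p + 7 * r) = S a /\ SigmaA M m n lo hi r a.
Proof.
  intros HE Hr Hj. destruct (HE r Hr) as [HA _].
  destruct (sigmaA_exists _ _ _ _ _ _ _ Hj) as [j0 Hj0].
  destruct HA as [[_ HA]|[x [Hx HA]]]; [exfalso; eapply HA; eauto|eauto].
Qed.

Lemma enc_Z_ex mem p M m n lo hi r j : EncPhi mem p M m n lo hi -> r < m ->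
  reach M m n r lo j hi -> exists a, mem (p + 7 * r + 1) = S a /\ SigmaZ M m n lo hi r a.
Proof.
  intros HE Hr Hj. destruct (HE r Hr) as [_ [HA _]].
  destruct (sigmaZ_exists _ _ _ _ _ _ _ Hj) as [j0 Hj0].
  destruct HA as [[_ HA]|[x [Hx HA]]]; [exfalso; eapply HA; eauto|eauto].
Qed.

Lemma enc_F mem p M m n lo hi r : EncPhi mem p M m n lo hi -> r < m ->
  (mem (p + 7 * r + 2) <> 0 <-> exists i, i < m /\ reach M m n i lo r hi).
Proof.
  intros HE Hr. destruct (HE r Hr) as [_ [_ [HF _]]].
  destruct HF as [[H1 H2]|[H1 H2]]; rewrite H1; split; auto; intros; try lia; contradiction.
Qed.

Definition good (mem : memory) (m k : nat) : Prop :=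
  k < m /\ mem (8 + 7 * k + 2) <> 0 /\ mem (8 + 7 * m + 7 * k) <> 0.

Lemma good_iff M m n s1 s2 s3 mem k :
  EncPhi mem 8 M m n s1 s2 -> EncPhi mem (8 + 7 * m) M m n s2 s3 -> k < m ->
  (good mem m k <-> (exists i, i < m /\ reach M m n i s1 k s2) /\ exists j, reach M m n k s2 j s3).
Proof.
  intros HV HW Hk. unfold good. rewrite <- (enc_F _ _ _ _ _ _ _ _ HV Hk). split.
  - intros (_&H1&H2). split; auto.
    destruct (mem (8 + 7 * m + 7 * k)) eqn:E; [lia|].
    exists n0. apply (enc_AS _ _ _ _ _ _ _ _ _ HW Hk E).
  - intros (H1&[j Hj]). repeat split; auto.
    destruct (enc_A_ex _ _ _ _ _ _ _ _ _ HW Hk Hj) as [a [Ha _]]. lia.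
Qed.

Lemma Y_none M m n s1 s2 s3 mem i :
  s1 <= s2 -> s2 <= s3 -> EncPhi mem 8 M m n s1 s2 -> i < m ->
  mem (8 + 7 * i) = 0 -> forall j, ~ reach M m n i s1 j s3.
Proof.
  intros H1 H2 HV Hi H0 j Hj. apply (compose M m n s1 s2 s3) in Hj; auto. destruct Hj as [k [Hk _]].
  eapply enc_A0; eauto.
Qed.

Lemma Y_char M m n s1 s2 s3 mem i a b j :
  s1 <= s2 -> s2 <= s3 -> EncPhi mem 8 M m n s1 s2 -> EncPhi mem (8 + 7 * m) M m n s2 s3 -> i < m ->
  mem (8 + 7 * i) = S a -> mem (8 + 7 * i + 1) = S b ->
  (reach M m n i s1 j s3 <-> exists k, a <= k <= b /\ good mem m k /\ reach M m n k s2 j s3).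
Proof.
  intros H1 H2 HV HW Hi Ha Hb.
  pose proof (enc_AS _ _ _ _ _ _ _ _ _ HV Hi Ha) as SA.
  pose proof (enc_ZS _ _ _ _ _ _ _ _ _ HV Hi Hb) as SZ.
  rewrite (compose M m n s1 s2 s3); auto. split.
  - intros [k [Hk1 Hk2]]. pose proof (reach_props _ _ _ _ _ _ _ Hk1).
    exists k. split; [apply (reach_interval M m n s1 s2 i a b k SA SZ Hk1)|]. split; auto.
    assert (k < m) by lia.
    apply (proj2 (good_iff M m n s1 s2 s3 mem k HV HW H0)). split; eauto.
  - intros [k (Hk&Hg&Hr)]. exists k. split; auto.
    assert (k < m) by (unfold good in Hg; lia).
    rewrite good_iff in Hg; eauto.
    destruct Hg as [[i' [_ Hi']] _]. eapply interval_reach; eauto.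
Qed.

Lemma Y_A M m n s1 s2 s3 mem i a b k1 x :
  s1 <= s2 -> s2 <= s3 -> EncPhi mem 8 M m n s1 s2 -> EncPhi mem (8 + 7 * m) M m n s2 s3 -> i < m ->
  mem (8 + 7 * i) = S a -> mem (8 + 7 * i + 1) = S b ->
  a <= k1 <= b -> good mem m k1 -> (forall k, a <= k < k1 -> ~ good mem m k) ->
  mem (8 + 7 * m + 7 * k1) = S x -> SigmaA M m n s1 s3 i x.
Proof.
  intros H1 H2 HV HW Hi Ha Hb Hk1 Hg Hmin Hx.
  assert (k1 < m) by (unfold good in Hg; lia).
  pose proof (enc_AS _ _ _ _ _ _ _ _ _ HW H Hx) as [Hxm [Hr Hmx]].
  split; auto. split.
  - rewrite (Y_char M m n s1 s2 s3 mem i a b x); eauto.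
  - intros j' Hj' Hr'. rewrite (Y_char M m n s1 s2 s3 mem i a b j') in Hr'; eauto.
    destruct Hr' as [k (Hk&Hgk&Hrk)].
    destruct (le_lt_dec k1 k).
    + apply (Hmx j'); auto. apply (cross _ _ _ _ _ _ _ _ _ Hr Hrk); lia.
    + apply (Hmin k); auto; lia.
Qed.

Lemma Y_Z M m n s1 s2 s3 mem i a b kz z :
  s1 <= s2 -> s2 <= s3 -> EncPhi mem 8 M m n s1 s2 -> EncPhi mem (8 + 7 * m) M m n s2 s3 -> i < m ->
  mem (8 + 7 * i) = S a -> mem (8 + 7 * i + 1) = S b ->
  a <= kz <= b -> good mem m kz -> (forall k, kz < k <= b -> ~ good mem m k) ->
  mem (8 + 7 * m + 7 * kz + 1) = S z -> SigmaZ M m n s1 s3 i z.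
Proof.
  intros H1 H2 HV HW Hi Ha Hb Hk1 Hg Hmax Hx.
  assert (kz < m) by (unfold good in Hg; lia).
  pose proof (enc_ZS _ _ _ _ _ _ _ _ _ HW H Hx) as [Hxm [Hr Hmx]].
  split; auto. split.
  - rewrite (Y_char M m n s1 s2 s3 mem i a b z); eauto.
  - intros j' Hj' Hj'm Hr'. rewrite (Y_char M m n s1 s2 s3 mem i a b j') in Hr'; eauto.
    destruct Hr' as [k (Hk&Hgk&Hrk)].
    destruct (le_lt_dec k kz).
    + apply (Hmx j'); auto. apply (cross _ _ _ _ _ _ _ _ _ Hrk Hr); lia.
    + apply (Hmax k); auto; lia.
Qed.

Lemma Y_empty M m n s1 s2 s3 mem i a b :
  s1 <= s2 -> s2 <= s3 -> EncPhi mem 8 M m n s1 s2 -> EncPhi mem (8 + 7 * m) M m n s2 s3 -> i < m ->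
  mem (8 + 7 * i) = S a -> mem (8 + 7 * i + 1) = S b ->
  (forall k, a <= k <= b -> ~ good mem m k) -> forall j, ~ reach M m n i s1 j s3.
Proof.
  intros H1 H2 HV HW Hi Ha Hb Hno j Hr.
  rewrite (Y_char M m n s1 s2 s3 mem i a b j) in Hr; eauto.
  destruct Hr as [k (Hk&Hgk&_)]. eapply Hno; eauto.
Qed.

Lemma Y_flag M m n s1 s2 s3 mem j :
  s1 <= s2 -> s2 <= s3 -> EncPhi mem 8 M m n s1 s2 -> EncPhi mem (8 + 7 * m) M m n s2 s3 -> j < m ->
  ((exists i, i < m /\ reach M m n i s1 j s3) <->
   mem (8 + 7 * m + 7 * j + 2) <> 0 /\ exists k, good mem m k /\
     mem (8 + 7 * m + 7 * k) <= S j /\ S j <= mem (8 + 7 * m + 7 * k + 1)).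
Proof.
  intros H1 H2 HV HW Hj. split.
  - intros [i [Hi Hr]]. apply (compose M m n s1 s2 s3) in Hr; auto.
    destruct Hr as [k [Hrv Hrw]]. pose proof (reach_props _ _ _ _ _ _ _ Hrv).
    split.
    + apply (enc_F _ _ _ _ _ _ _ _ HW Hj). exists k; split; [lia|auto].
    + exists k. split.
      * apply (good_iff M m n s1 s2 s3); try lia; auto. split; eauto.
      * destruct (enc_A_ex _ _ _ _ _ _ _ _ _ HW (proj1 (proj2 (proj2 (proj2 (proj2 (proj2 H)))))) Hrw) as [x [Hx SA]].
        destruct (enc_Z_ex _ _ _ _ _ _ _ _ _ HW (proj1 (proj2 (proj2 (proj2 (proj2 (proj2 H)))))) Hrw) as [z [Hz SZ]].
        rewrite Hx, Hz. pose proof (reach_interval _ _ _ _ _ _ _ _ _ SA SZ Hrw). lia.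
  - intros [Hf [k (Hg&HA&HZ)]].
    assert (Hk : k < m) by (unfold good in Hg; lia).
    pose proof Hg as Hg'. rewrite (good_iff M m n s1 s2 s3) in Hg'; auto.
    destruct Hg' as [[i [Hi Hri]] _].
    destruct (mem (8 + 7 * m + 7 * k)) as [|x] eqn:Ex; [unfold good in Hg; lia|].
    destruct (mem (8 + 7 * m + 7 * k + 1)) as [|z] eqn:Ez; [lia|].
    pose proof (enc_AS _ _ _ _ _ _ _ _ _ HW Hk Ex) as SA.
    pose proof (enc_ZS _ _ _ _ _ _ _ _ _ HW Hk Ez) as SZ.
    apply (enc_F _ _ _ _ _ _ _ _ HW Hj) in Hf. destruct Hf as [k' [_ Hk']].
    exists i. split; auto. apply (compose M m n s1 s2 s3); auto.
    exists k. split; auto. eapply interval_reach; eauto. lia.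
Qed.

Definition Prog : list instr := [
(* 0 *) IAdd 1 0 0; IAdd 1 1 1; IAdd 1 1 1; ISub 1 1 0; IConst 2 0; IConst 3 0;
(* 6: loop A *) ISub 4 0 2; IJz 4 40;
(* 8 *) IAdd 4 2 2; IAdd 4 4 4; IAdd 4 4 4; ISub 4 4 2; IConst 5 8; IAdd 4 4 5;
(* 14 *) IConst 6 0; IConst 5 6; IAdd 5 4 5; IStore 5 6;
(* 18 *) IAdd 5 4 1; IAdd 5 5 1; IConst 7 3; IAdd 5 5 7; IStore 5 6; IConst 7 1; IAdd 5 5 7; IStore 5 6;
(* 26 *) IConst 5 2; IAdd 5 4 5; ILoad 5 5; IJz 5 34; IAdd 5 4 1; ILoad 5 5; IJz 5 34; IAdd 3 4 6;
(* 34 *) IConst 5 4; IAdd 5 4 5; IStore 5 3; IConst 7 1; IAdd 2 2 7; IJmp 6;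
(* 40 *) IConst 7 0; IAdd 2 0 7; IConst 3 0;
(* 43: loop B *) IJz 2 78; IConst 7 1; ISub 2 2 7;
(* 46 *) IAdd 4 2 2; IAdd 4 4 4; IAdd 4 4 4; ISub 4 4 2; IConst 5 8; IAdd 4 4 5;
(* 52 *) IConst 5 2; IAdd 5 4 5; ILoad 5 5; IJz 5 74; IAdd 5 4 1; ILoad 6 5; IJz 6 74;
(* 59 *) IConst 7 0; IAdd 3 4 7; IConst 7 1; IAdd 5 5 7; ILoad 5 5;
(* 64 *) IAdd 7 6 6; IAdd 7 7 7; IAdd 7 7 7; ISub 7 7 6; IConst 6 7; IAdd 7 7 6;
(* 70 *) ILoad 6 7; ISub 6 5 6; IJz 6 74; IStore 7 5;
(* 74 *) IConst 5 5; IAdd 5 4 5; IStore 5 3; IJmp 43;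
(* 78 *) IConst 2 0; IConst 3 0;
(* 80: loop C *) ISub 4 0 2; IJz 4 112;
(* 82 *) IAdd 4 2 2; IAdd 4 4 4; IAdd 4 4 4; ISub 4 4 2; IConst 5 8; IAdd 4 4 5;
(* 88 *) IConst 5 6; IAdd 5 4 5; ILoad 5 5; ISub 6 5 3; IJz 6 95; IConst 6 0; IAdd 3 5 6;
(* 95 *) IConst 6 0; ISub 5 3 2; IJz 5 104; IAdd 5 4 1; IConst 7 2; IAdd 5 5 7; ILoad 5 5; IJz 5 104; IConst 6 1;
(* 104 *) IAdd 5 4 1; IAdd 5 5 1; IConst 7 2; IAdd 5 5 7; IStore 5 6; IConst 7 1; IAdd 2 2 7; IJmp 80;
(* 112 *) IConst 2 0;
(* 113: loop D *) ISub 4 0 2; IJz 4 193;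
(* 115 *) IAdd 4 2 2; IAdd 4 4 4; IAdd 4 4 4; ISub 4 4 2; IConst 5 8; IAdd 4 4 5;
(* 121 *) ILoad 5 4; IJz 5 152;
(* 123 *) IAdd 6 5 5; IAdd 6 6 6; IAdd 6 6 6; ISub 6 6 5; IConst 7 6; IAdd 6 6 7; ILoad 3 6; IJz 3 152;
(* 131 *) IConst 7 1; IAdd 5 4 7; ILoad 5 5;
(* 134 *) IAdd 6 5 5; IAdd 6 6 6; IAdd 6 6 6; ISub 6 6 5; IAdd 6 6 7; ISub 7 3 6; IJz 7 142; IJmp 152;
(* 142 *) IAdd 3 3 1; ILoad 3 3; IConst 7 4; IAdd 6 6 7; ILoad 6 6; IAdd 6 6 1; IConst 7 1; IAdd 6 6 7; ILoad 6 6; IJmp 154;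
(* 152 *) IConst 3 0; IConst 6 0;
(* 154 *) IAdd 4 4 1; IAdd 4 4 1; IStore 4 3; IConst 7 1; IAdd 5 4 7; IStore 5 6;
(* 160 *) IJz 3 190;
(* 161 *) IAdd 5 3 3; IAdd 5 5 5; IAdd 5 5 5; ISub 5 5 3; IAdd 5 5 1; IAdd 5 5 1; IConst 7 4; IAdd 5 5 7;
(* 169 *) IConst 7 5; IAdd 7 4 7; ILoad 3 5; IStore 7 3; IConst 7 1; IAdd 3 2 7; IStore 5 3;
(* 176 *) IJz 6 190;
(* 177 *) IAdd 5 6 6; IAdd 5 5 5; IAdd 5 5 5; ISub 5 5 6; IAdd 5 5 1; IAdd 5 5 1; IConst 7 5; IAdd 5 5 7;
(* 185 *) IConst 7 6; IAdd 7 4 7; ILoad 6 5; IStore 7 6; IStore 5 3;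
(* 190 *) IConst 7 1; IAdd 2 2 7; IJmp 113;
(* 193 *) IHalt ].




Definition wp (P : list instr) (n : nat) (st : state) (Q : state -> Prop) : Prop :=
  exists t st', t <= n /\ run P t st = Some st' /\ Q st'.

Lemma run_add P a b st : run P (a + b) st = match run P a st with Some s => run P b s | None => None end.
Proof.
  revert st; induction a; intros st; simpl; auto.
  destruct (step P st); auto.
Qed.

Lemma wp_step P n st st' Q : step P st = Some st' -> wp P n st' Q -> wp P (S n) st Q.
Proof.
  intros Hs (t&s&Ht&Hr&HQ). exists (S t), s. repeat split; auto; try lia.
  simpl. rewrite Hs. auto.
Qed.

Lemma wp_ret P n st (Q : state -> Prop) : Q st -> wp P n st Q.
Proof. intros. exists 0, st. repeat split; auto; lia. Qed.

Lemma wp_seq P n1 n2 st Q : wp P n1 st (fun s => wp P n2 s Q) -> wp P (n1 + n2) st Q.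
Proof.
  intros (t&s&Ht&Hr&(t2&s2&Ht2&Hr2&HQ)). exists (t + t2), s2. repeat split; auto; try lia.
  rewrite run_add, Hr. auto.
Qed.

Lemma wp_mono P n n' st (Q Q' : state -> Prop) : n <= n' -> (forall s, Q s -> Q' s) -> wp P n st Q -> wp P n' st Q'.
Proof. intros Hn HQ (t&s&Ht&Hr&Hq). exists t, s. repeat split; auto; lia. Qed.

Lemma upd_o M a v x : x <> a -> upd M a v x = M x.
Proof. intros. unfold upd. destruct (Nat.eqb_spec x a); congruence. Qed.
Lemma upd_s M a v x : x = a -> upd M a v x = v.
Proof. intros. unfold upd. destruct (Nat.eqb_spec x a); congruence. Qed.

Ltac memsimp := repeat match goal with |- context [upd ?M ?a ?v ?x] =>
  first [rewrite (upd_o M a v x) by lia | rewrite (upd_s M a v x) by lia] end.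
Ltac memsimpH H := repeat match type of H with context [upd ?M ?a ?v ?x] =>
  first [rewrite (upd_o M a v x) in H by lia | rewrite (upd_s M a v x) in H by lia] end.

Lemma st_const P pc mem d k : nth_error P pc = Some (IConst d k) -> step P (pc, mem) = Some (S pc, upd mem d k).
Proof. intros H; unfold step; rewrite H; auto. Qed.
Lemma st_add P pc mem d a b : nth_error P pc = Some (IAdd d a b) -> step P (pc, mem) = Some (S pc, upd mem d (mem a + mem b)).
Proof. intros H; unfold step; rewrite H; auto. Qed.
Lemma st_sub P pc mem d a b : nth_error P pc = Some (ISub d a b) -> step P (pc, mem) = Some (S pc, upd mem d (mem a - mem b)).
Proof. intros H; unfold step; rewrite H; auto. Qed.
Lemma st_load P pc mem d a : nth_error P pc = Some (ILoad d a) -> step P (pc, mem) = Some (S pc, upd mem d (mem (mem a))).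
Proof. intros H; unfold step; rewrite H; auto. Qed.
Lemma st_store P pc mem a b : nth_error P pc = Some (IStore a b) -> step P (pc, mem) = Some (S pc, upd mem (mem a) (mem b)).
Proof. intros H; unfold step; rewrite H; auto. Qed.
Lemma st_jz0 P pc mem a l : nth_error P pc = Some (IJz a l) -> mem a = 0 -> step P (pc, mem) = Some (l, mem).
Proof. intros H H0; unfold step; rewrite H, H0; auto. Qed.
Lemma st_jzS P pc mem a l : nth_error P pc = Some (IJz a l) -> mem a <> 0 -> step P (pc, mem) = Some (S pc, mem).
Proof. intros H H0; unfold step; rewrite H. apply Nat.eqb_neq in H0. rewrite H0. auto. Qed.
Lemma st_jmp P pc mem l : nth_error P pc = Some (IJmp l) -> step P (pc, mem) = Some (l, mem).
Proof. intros H; unfold step; rewrite H; auto. Qed.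

Lemma mul7 P pc d s n mem Q :
  nth_error P pc = Some (IAdd d s s) -> nth_error P (S pc) = Some (IAdd d d d) ->
  nth_error P (S (S pc)) = Some (IAdd d d d) -> nth_error P (S (S (S pc))) = Some (ISub d d s) -> d <> s ->
  wp P n (S (S (S (S pc))), upd mem d (7 * mem s)) Q -> wp P (S (S (S (S n)))) (pc, mem) Q.
Proof.
  intros H1 H2 H3 H4 Hds Hw.
  eapply wp_step. { apply st_add; eauto. }
  eapply wp_step. { apply st_add; eauto. }
  eapply wp_step. { apply st_add; eauto. }
  eapply wp_step. { apply st_sub; eauto. }
  match goal with |- wp _ _ (_, ?m') _ => replace m' with (upd mem d (7*mem s)); auto end.
  apply functional_extensionality; intros x. unfold upd.
  repeat rewrite Nat.eqb_refl. destruct (Nat.eqb_spec s d); [congruence|].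
  destruct (Nat.eqb_spec x d); lia.
Qed.

Lemma loop_gen P (I : nat -> memory -> Prop) h m c e (Qx : state -> Prop) :
  (forall k mem, k < m -> I k mem -> wp P c (h, mem) (fun s => fst s = h /\ I (S k) (snd s))) ->
  (forall mem, I m mem -> wp P e (h, mem) Qx) ->
  forall k mem, k <= m -> I k mem -> wp P (c * (m - k) + e) (h, mem) Qx.
Proof.
  intros Hb He. intros k. remember (m - k) as d. revert k Heqd.
  induction d; intros k Hd mem Hk HI.
  - assert (k = m) by lia. subst. replace (c * 0 + e) with e by lia. auto.
  - replace (c * S d + e) with (c + (c * d + e)) by lia.
    apply wp_seq. eapply (wp_mono _ c c); [lia| |apply (Hb k mem); [lia|exact HI]].
    intros [pc mem'] [Hpc HI']. simpl in Hpc, HI'. subst pc.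
    apply (IHd (S k)); auto; lia.
Qed.

Ltac regs := repeat match goal with H : ?M ?c = _ |- context [?M ?c] => is_var M; rewrite H end.
Ltac s1 := eapply wp_step; [first [ eapply st_const; reflexivity | eapply st_add; reflexivity | eapply st_sub; reflexivity | eapply st_load; reflexivity | eapply st_store; reflexivity | eapply st_jmp; reflexivity] |]; memsimp; regs.
Ltac jz0 := eapply wp_step; [eapply st_jz0; [reflexivity| memsimp; try lia] |]; memsimp.
Ltac jzS := eapply wp_step; [eapply st_jzS; [reflexivity| memsimp; try lia] |]; memsimp.
Ltac m7 := eapply mul7; [reflexivity|reflexivity|reflexivity|reflexivity|lia|]; memsimp.


Definition goodb (mem0 : memory) m k : bool :=
  negb (mem0 (8 + 7 * k + 2) =? 0) && negb (mem0 (8 + 7 * m + 7 * k) =? 0).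

Fixpoint prevR mem0 m k : nat :=
  match k with 0 => 0 | S k' => if goodb mem0 m k' then 8 + 7 * k' else prevR mem0 m k' end.

Definition Inputs (mem0 : memory) m (mem : memory) : Prop :=
  forall r o, r < m -> o < 3 -> mem (8 + 7 * r + o) = mem0 (8 + 7 * r + o) /\
     mem (8 + 7 * m + 7 * r + o) = mem0 (8 + 7 * m + 7 * r + o).

Definition InvA mem0 m k (mem : memory) : Prop :=
  mem 0 = m /\ mem 1 = 7 * m /\ mem 2 = k /\ mem 3 = prevR mem0 m k /\ Inputs mem0 m mem /\
  (forall r, r < k -> mem (8 + 7 * r + 6) = 0 /\ mem (8 + 14 * m + 7 * r + 3) = 0 /\
      mem (8 + 14 * m + 7 * r + 4) = 0 /\ mem (8 + 7 * r + 4) = prevR mem0 m (S r)).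

Ltac finA k Hpr HI HW := apply wp_ret;
    split; [reflexivity|]; cbn [snd];
    unfold InvA; memsimp; regs; split; [auto|]; split; [auto|]; split; [lia|]; split; [rewrite Hpr; lia|]; split;
    [ intros r o Hr Ho; memsimp; apply HI; auto
    | intros r Hr; destruct (Nat.eq_dec r k) as [->|Hne];
      [ memsimp; repeat split; auto; lia
      | memsimp; apply HW; lia ]].

Lemma bodyA mem0 m k mem : k < m -> InvA mem0 m k mem ->
  wp Prog 40 (6, mem) (fun s => fst s = 6 /\ InvA mem0 m (S k) (snd s)).
Proof.
  intros Hk (H0&H1&H2&H3&HI&HW).
  assert (EV2 : mem (7 * k + 8 + 2) = mem0 (8 + 7 * k + 2)).
  { replace (7 * k + 8 + 2) with (8 + 7 * k + 2) by lia. apply HI; lia. }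
  assert (EW0 : mem (7 * k + 8 + 7 * m) = mem0 (8 + 7 * m + 7 * k)).
  { replace (7 * k + 8 + 7 * m) with (8 + 7 * m + 7 * k + 0) by lia. rewrite Nat.add_0_r. 
    pose proof (proj2 (HI k 0 Hk ltac:(lia))) as E. rewrite Nat.add_0_r in E. exact E. }
  s1. jzS. m7. rewrite ?H0, ?H1, ?H2, ?H3. s1. s1. s1. s1. s1. s1. s1. s1. s1. s1. s1. s1. s1. s1. s1. s1. s1.
  assert (Hpr : prevR mem0 m (S k) = if goodb mem0 m k then 8 + 7 * k else prevR mem0 m k) by reflexivity.
  unfold goodb in Hpr.
  destruct (Nat.eq_dec (mem0 (8 + 7 * k + 2)) 0) as [E2|E2].
  - rewrite E2 in Hpr. cbn [Nat.eqb negb andb] in Hpr. jz0. s1. s1. s1. s1. s1. s1. finA k Hpr HI HW.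
  - jzS. s1. s1.
    destruct (Nat.eq_dec (mem0 (8 + 7 * m + 7 * k)) 0) as [E3|E3].
    + rewrite E3 in Hpr. destruct (mem0 (8 + 7 * k + 2) =? 0); cbn [Nat.eqb negb andb] in Hpr;
      jz0; s1; s1; s1; s1; s1; s1; finA k Hpr HI HW.
    + replace (mem0 (8 + 7 * k + 2) =? 0) with false in Hpr by (symmetry; apply Nat.eqb_neq; auto).
      replace (mem0 (8 + 7 * m + 7 * k) =? 0) with false in Hpr by (symmetry; apply Nat.eqb_neq; auto).
      cbn [Nat.eqb negb andb] in Hpr.
      jzS. s1. s1. s1. s1. s1. s1. s1. finA k Hpr HI HW.
Qed.

Lemma exitA mem0 m mem : InvA mem0 m m mem ->
  wp Prog 2 (6, mem) (fun s => fst s = 40 /\ InvA mem0 m m (snd s)).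
Proof.
  intros (H0&H1&H2&H3&HI&HW).
  s1. jz0. apply wp_ret. split; [reflexivity|]. cbn [snd].
  unfold InvA. memsimp. regs. split; [auto|]. split; [auto|]. split; [lia|]. split; [auto|]. split.
  - intros r o Hr Ho. memsimp. apply HI; auto.
  - intros r Hr. memsimp. apply HW; auto.
Qed.

Lemma preamble mem0 m : mem0 0 = m ->
  wp Prog 10 (0, mem0) (fun s => fst s = 6 /\ InvA mem0 m 0 (snd s)).
Proof.
  intros H0.
  m7. s1. s1. apply wp_ret. split; [reflexivity|]. cbn [snd].
  unfold InvA. memsimp. regs. split; [auto|]. split; [auto|]. split; [lia|]. split; [auto|]. split.
  - intros r o Hr Ho. memsimp. auto.
  - intros r Hr. lia.
Qed.

Lemma phaseA mem0 m : mem0 0 = m ->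
  wp Prog (10 + (40 * (m - 0) + 2)) (0, mem0) (fun s => fst s = 40 /\ InvA mem0 m m (snd s)).
Proof.
  intros H0. apply wp_seq. eapply (wp_mono _ 10 10); [lia| |apply (preamble _ _ H0)].
  intros [pc mem] [Hpc HI]. simpl in Hpc, HI. subst pc.
  apply (loop_gen Prog (InvA mem0 m) 6 m 40 2); auto.
  - intros k mem' Hk HI'. apply bodyA; auto.
  - intros. apply exitA; auto.
  - lia.
Qed.

Fixpoint nextFrom mem0 m k d : nat :=
  match d with 0 => 0 | S d' => if goodb mem0 m k then 8 + 7 * k else nextFrom mem0 m (S k) d' end.

Fixpoint ZF (mem0 : memory) m k d x : nat :=
  match d with 0 => 0
  | S d' => Nat.max (ZF mem0 m (S k) d' x)
      (if (goodb mem0 m k && (mem0 (8 + 7 * m + 7 * k) =? S x))%bool then mem0 (8 + 7 * m + 7 * k + 1) else 0)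
  end.

Definition InvB mem0 m d (mem : memory) : Prop :=
  mem 0 = m /\ mem 1 = 7 * m /\ mem 2 = m - d /\ mem 3 = nextFrom mem0 m (m - d) d /\ Inputs mem0 m mem /\
  (forall r, r < m -> mem (8 + 14 * m + 7 * r + 3) = 0 /\
      mem (8 + 14 * m + 7 * r + 4) = 0 /\ mem (8 + 7 * r + 4) = prevR mem0 m (S r)) /\
  (forall r, m - d <= r < m -> mem (8 + 7 * r + 5) = nextFrom mem0 m r (m - r)) /\
  (forall x, x < m -> mem (8 + 7 * x + 6) = ZF mem0 m (m - d) d x).

Definition WBound (mem0 : memory) m : Prop :=
  forall r, r < m -> mem0 (8 + 7 * m + 7 * r) <= m.

Lemma initB mem0 m mem : InvA mem0 m m mem ->
  wp Prog 3 (40, mem) (fun s => fst s = 43 /\ InvB mem0 m 0 (snd s)).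
Proof.
  intros (H0&H1&H2&H3&HI&HW).
  s1. s1. s1. apply wp_ret. split; [reflexivity|]. cbn [snd].
  unfold InvB. memsimp. regs. rewrite Nat.sub_0_r. split; [auto|]. split; [auto|]. split; [lia|]. split; [auto|]. split.
  - intros r o Hr Ho. memsimp. apply HI; auto.
  - split; [|split].
    + intros r Hr. memsimp. destruct (HW r Hr) as (?&?&?&?). auto.
    + intros r Hr. lia.
    + intros x Hx. memsimp. destruct (HW x Hx) as (?&?&?&?). auto.
Qed.

Ltac finB k HnF HI HY HN := apply wp_ret; split; [reflexivity|]; cbn [snd];
    unfold InvB; memsimp; regs;
    match goal with E : ?m - S ?d = k |- _ => rewrite E end;
    split; [auto|]; split; [auto|]; split; [lia|]; split; [rewrite HnF; lia|]; split;
    [ intros r o Hr Ho; memsimp; apply HI; auto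
    | split; [|split];
      [ intros r Hr; memsimp; apply HY; auto
      | intros r Hr; destruct (Nat.eq_dec r k) as [->|Hne];
        [ memsimp; match goal with E : ?m - S ?d = k |- _ => replace (m - k) with (S d) by lia end;
          rewrite HnF; lia
        | memsimp; apply HN; lia ]
      | ]].

Lemma bodyB mem0 m d mem : WBound mem0 m -> d < m -> InvB mem0 m d mem ->
  wp Prog 40 (43, mem) (fun s => fst s = 43 /\ InvB mem0 m (S d) (snd s)).
Proof.
  intros HB Hd (H0&H1&H2&H3&HI&HY&HN&HZ).
  destruct (m - d) as [|k] eqn:Ek; [lia|].
  assert (Ek' : m - S d = k) by lia.
  assert (EV2 : mem (7 * k + 8 + 2) = mem0 (8 + 7 * k + 2)).
  { replace (7 * k + 8 + 2) with (8 + 7 * k + 2) by lia. apply HI; lia. }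
  assert (EW0 : mem (7 * k + 8 + 7 * m) = mem0 (8 + 7 * m + 7 * k)).
  { replace (7 * k + 8 + 7 * m) with (8 + 7 * m + 7 * k + 0) by lia. rewrite Nat.add_0_r.
    pose proof (proj2 (HI k 0 ltac:(lia) ltac:(lia))) as E. rewrite Nat.add_0_r in E. exact E. }
  assert (EW1 : mem (7 * k + 8 + 7 * m + 1) = mem0 (8 + 7 * m + 7 * k + 1)).
  { replace (7 * k + 8 + 7 * m + 1) with (8 + 7 * m + 7 * k + 1) by lia. apply HI; lia. }
  assert (HnF : nextFrom mem0 m k (S d) = if goodb mem0 m k then 8 + 7 * k else nextFrom mem0 m (S k) d) by reflexivity.
  assert (HzF : forall x, ZF mem0 m k (S d) x = Nat.max (ZF mem0 m (S k) d x)
      (if (goodb mem0 m k && (mem0 (8 + 7 * m + 7 * k) =? S x))%bool then mem0 (8 + 7 * m + 7 * k + 1) else 0)) by reflexivity.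
  pose proof (HB k ltac:(lia)) as HBk.
  jzS. s1. s1. replace (S k - 1) with k by lia. m7. s1. s1. s1. s1. s1.
  destruct (Nat.eq_dec (mem0 (8 + 7 * k + 2)) 0) as [E2|E2].
  - assert (Hg : goodb mem0 m k = false) by (unfold goodb; rewrite E2; reflexivity).
    rewrite Hg in HnF, HzF.
    jz0. s1. s1. s1. s1. finB k HnF HI HY HN.
    intros x Hx. memsimp. rewrite HzF, HZ by auto. cbn [andb]. lia.
  - jzS. s1. s1.
    destruct (mem0 (8 + 7 * m + 7 * k)) as [|x0] eqn:E3.
    + assert (Hg : goodb mem0 m k = false) by (unfold goodb; rewrite E3; apply andb_false_r).
      rewrite Hg in HnF, HzF.
      jz0. s1. s1. s1. s1. finB k HnF HI HY HN.
      intros x Hx. memsimp. rewrite HzF, HZ by auto. cbn [andb]. lia.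
    + assert (Hg : goodb mem0 m k = true) by (unfold goodb; rewrite E3; apply andb_true_iff; split; apply negb_true_iff; apply Nat.eqb_neq; auto).
      rewrite Hg in HnF, HzF. cbn [andb] in HzF.
      assert (EZ0 : mem (7 * S x0 + 7) = ZF mem0 m (S k) d x0).
      { rewrite <- HZ by lia. f_equal. lia. }
      jzS. s1. s1. s1. s1. s1. m7. s1. s1. s1. s1.
      destruct (Nat.eq_dec (mem0 (8 + 7 * m + 7 * k + 1) - ZF mem0 m (S k) d x0) 0) as [E4|E4].
      * jz0. s1. s1. s1. s1. finB k HnF HI HY HN.
        intros x Hx. memsimp. rewrite HzF, HZ by auto.
        destruct (Nat.eqb_spec (S x0) (S x)) as [Ex|Ex]; [assert (x = x0) by lia; subst x; lia|lia].
      * jzS. s1. s1. s1. s1. s1. finB k HnF HI HY HN.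
        intros x Hx. destruct (Nat.eq_dec x x0) as [->|Hne].
        -- memsimp. rewrite HzF, Nat.eqb_refl. lia.
        -- memsimp. rewrite HzF, HZ by auto. destruct (Nat.eqb_spec (S x0) (S x)) as [Ex|Ex]; [lia|lia].
Qed.

Lemma exitB mem0 m mem : InvB mem0 m m mem ->
  wp Prog 1 (43, mem) (fun s => fst s = 78 /\ InvB mem0 m m (snd s)).
Proof.
  intros HI. pose proof HI as (H0&H1&H2&_). rewrite Nat.sub_diag in H2.
  jz0. apply wp_ret. split; auto.
Qed.

Lemma phaseB mem0 m mem : WBound mem0 m -> InvA mem0 m m mem ->
  wp Prog (3 + (40 * (m - 0) + 1)) (40, mem) (fun s => fst s = 78 /\ InvB mem0 m m (snd s)).
Proof.
  intros HB HA. apply wp_seq. eapply (wp_mono _ 3 3); [lia| |apply (initB _ _ _ HA)].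
  intros [pc mem'] [Hpc HI]. simpl in Hpc, HI. subst pc.
  apply (loop_gen Prog (InvB mem0 m) 43 m 40 1); auto.
  - intros k mem'' Hk HI'. apply bodyB; auto.
  - intros. apply exitB; auto.
  - lia.
Qed.

Fixpoint runC mem0 m j : nat :=
  match j with 0 => 0 | S j' => Nat.max (runC mem0 m j') (ZF mem0 m 0 m j') end.

Definition flagF mem0 m r : nat :=
  if runC mem0 m (S r) - r =? 0 then 0 else if mem0 (8 + 7 * m + 7 * r + 2) =? 0 then 0 else 1.

Definition InvC mem0 m j (mem : memory) : Prop :=
  mem 0 = m /\ mem 1 = 7 * m /\ mem 2 = j /\ mem 3 = runC mem0 m j /\ Inputs mem0 m mem /\
  (forall r, r < m -> mem (8 + 14 * m + 7 * r + 3) = 0 /\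
      mem (8 + 14 * m + 7 * r + 4) = 0 /\ mem (8 + 7 * r + 4) = prevR mem0 m (S r)) /\
  (forall r, r < m -> mem (8 + 7 * r + 5) = nextFrom mem0 m r (m - r)) /\
  (forall x, x < m -> mem (8 + 7 * x + 6) = ZF mem0 m 0 m x) /\
  (forall r, r < j -> mem (8 + 14 * m + 7 * r + 2) = flagF mem0 m r).

Lemma initC mem0 m mem : InvB mem0 m m mem ->
  wp Prog 2 (78, mem) (fun s => fst s = 80 /\ InvC mem0 m 0 (snd s)).
Proof.
  intros (H0&H1&H2&H3&HI&HY&HN&HZ). rewrite Nat.sub_diag in *.
  s1. s1. apply wp_ret. split; [reflexivity|]. cbn [snd].
  unfold InvC. memsimp. regs. split; [auto|]. split; [auto|]. split; [lia|]. split; [auto|]. split.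
  - intros r o Hr Ho. memsimp. apply HI; auto.
  - split; [|split; [|split]].
    + intros r Hr. memsimp. apply HY; auto.
    + intros r Hr. memsimp. apply HN; lia.
    + intros x Hx. memsimp. apply HZ; auto.
    + intros; lia.
Qed.

Ltac finC j Hfl HI HY HN HZ HF := apply wp_ret; split; [reflexivity|]; cbn [snd];
    unfold InvC; memsimp; regs;
    split; [auto|]; split; [auto|]; split; [lia|]; split; [simpl runC; lia|]; split;
    [ intros r o Hr Ho; memsimp; apply HI; auto
    | split; [|split; [|split]];
      [ intros r Hr; memsimp; apply HY; auto
      | intros r Hr; memsimp; apply HN; auto
      | intros x Hx; memsimp; apply HZ; auto
      | intros r Hr; destruct (Nat.eq_dec r j) as [->|Hne];
        [ memsimp; rewrite Hfl; reflexivity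
        | memsimp; apply HF; lia ] ] ].

Lemma bodyC mem0 m j mem : j < m -> InvC mem0 m j mem ->
  wp Prog 40 (80, mem) (fun s => fst s = 80 /\ InvC mem0 m (S j) (snd s)).
Proof.
  intros Hj (H0&H1&H2&H3&HI&HY&HN&HZ&HF).
  assert (EZ : mem (7 * j + 8 + 6) = ZF mem0 m 0 m j).
  { rewrite <- HZ by auto. f_equal. lia. }
  assert (EW2 : mem (7 * j + 8 + 7 * m + 2) = mem0 (8 + 7 * m + 7 * j + 2)).
  { replace (7 * j + 8 + 7 * m + 2) with (8 + 7 * m + 7 * j + 2) by lia. apply HI; lia. }
  assert (Hrc : runC mem0 m (S j) = Nat.max (runC mem0 m j) (ZF mem0 m 0 m j)) by reflexivity.
  s1. jzS. m7. s1. s1. s1. s1. s1. s1.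
  destruct (Nat.eq_dec (ZF mem0 m 0 m j - runC mem0 m j) 0) as [E1|E1].
  - assert (Hr' : runC mem0 m (S j) = runC mem0 m j) by (rewrite Hrc; lia).
    jz0. s1. s1.
    destruct (Nat.eq_dec (runC mem0 m j - j) 0) as [E2|E2].
    + assert (Hfl : flagF mem0 m j = 0) by (unfold flagF; rewrite Hr', E2; reflexivity).
      jz0. s1. s1. s1. s1. s1. s1. s1. s1. finC j Hfl HI HY HN HZ HF.
    + jzS. s1. s1. s1. s1.
      destruct (Nat.eq_dec (mem0 (8 + 7 * m + 7 * j + 2)) 0) as [E3|E3].
      * assert (Hfl : flagF mem0 m j = 0) by (unfold flagF; rewrite E3; destruct (_ =? 0); reflexivity).
        jz0. s1. s1. s1. s1. s1. s1. s1. s1. finC j Hfl HI HY HN HZ HF.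
      * assert (Hfl : flagF mem0 m j = 1).
        { unfold flagF. rewrite Hr'. replace (runC mem0 m j - j =? 0) with false by (symmetry; apply Nat.eqb_neq; auto).
          replace (mem0 (8 + 7 * m + 7 * j + 2) =? 0) with false by (symmetry; apply Nat.eqb_neq; auto). reflexivity. }
        jzS. s1. s1. s1. s1. s1. s1. s1. s1. s1. finC j Hfl HI HY HN HZ HF.
  - assert (Hr' : runC mem0 m (S j) = ZF mem0 m 0 m j) by (rewrite Hrc; lia).
    jzS. s1. s1. s1. s1.
    destruct (Nat.eq_dec (ZF mem0 m 0 m j - j) 0) as [E2|E2].
    + assert (Hfl : flagF mem0 m j = 0) by (unfold flagF; rewrite Hr', E2; reflexivity).
      jz0. s1. s1. s1. s1. s1. s1. s1. s1. finC j Hfl HI HY HN HZ HF.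
    + jzS. s1. s1. s1. s1.
      destruct (Nat.eq_dec (mem0 (8 + 7 * m + 7 * j + 2)) 0) as [E3|E3].
      * assert (Hfl : flagF mem0 m j = 0) by (unfold flagF; rewrite E3; destruct (_ =? 0); reflexivity).
        jz0. s1. s1. s1. s1. s1. s1. s1. s1. finC j Hfl HI HY HN HZ HF.
      * assert (Hfl : flagF mem0 m j = 1).
        { unfold flagF. rewrite Hr'. replace (ZF mem0 m 0 m j - j =? 0) with false by (symmetry; apply Nat.eqb_neq; auto).
          replace (mem0 (8 + 7 * m + 7 * j + 2) =? 0) with false by (symmetry; apply Nat.eqb_neq; auto). reflexivity. }
        jzS. s1. s1. s1. s1. s1. s1. s1. s1. s1. finC j Hfl HI HY HN HZ HF.
Qed.

Lemma exitC mem0 m mem : InvC mem0 m m mem ->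
  wp Prog 2 (80, mem) (fun s => fst s = 112 /\ InvC mem0 m m (snd s)).
Proof.
  intros (H0&H1&H2&H3&HI&HY&HN&HZ&HF).
  s1. jz0. apply wp_ret. split; [reflexivity|]. cbn [snd].
  unfold InvC. memsimp. regs. split; [auto|]. split; [auto|]. split; [lia|]. split; [auto|]. split.
  - intros r o Hr Ho. memsimp. apply HI; auto.
  - split; [|split; [|split]].
    + intros r Hr. memsimp. apply HY; auto.
    + intros r Hr. memsimp. apply HN; lia.
    + intros x Hx. memsimp. apply HZ; auto.
    + intros r Hr. memsimp. apply HF; auto.
Qed.

Lemma phaseC mem0 m mem : InvB mem0 m m mem ->
  wp Prog (2 + (40 * (m - 0) + 2)) (78, mem) (fun s => fst s = 112 /\ InvC mem0 m m (snd s)).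
Proof.
  intros HA. apply wp_seq. eapply (wp_mono _ 2 2); [lia| |apply (initC _ _ _ HA)].
  intros [pc mem'] [Hpc HI]. simpl in Hpc, HI. subst pc.
  apply (loop_gen Prog (InvC mem0 m) 80 m 40 2); auto.
  - intros k mem'' Hk HI'. apply bodyC; auto.
  - intros. apply exitC; auto.
  - lia.
Qed.

Lemma nextFrom_spec mem0 m d : forall k,
  (nextFrom mem0 m k d = 0 /\ forall r, k <= r < k + d -> goodb mem0 m r = false) \/
  (exists k1, k <= k1 < k + d /\ goodb mem0 m k1 = true /\ nextFrom mem0 m k d = 8 + 7 * k1 /\
     forall r, k <= r < k1 -> goodb mem0 m r = false).
Proof.
  induction d; intros k.
  - left. split; auto. intros; lia.
  - simpl. destruct (goodb mem0 m k) eqn:G.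
    + right. exists k. repeat split; auto; try lia.
    + destruct (IHd (S k)) as [[H1 H2]|[k1 (H1&H2&H3&H4)]].
      * left. split; auto. intros r Hr. destruct (Nat.eq_dec r k); [subst; auto|apply H2; lia].
      * right. exists k1. repeat split; auto; try lia.
        intros r Hr. destruct (Nat.eq_dec r k); [subst; auto|apply H4; lia].
Qed.

Lemma prevR_spec mem0 m b :
  (prevR mem0 m b = 0 /\ forall r, r < b -> goodb mem0 m r = false) \/
  (exists kz, kz < b /\ goodb mem0 m kz = true /\ prevR mem0 m b = 8 + 7 * kz /\
     forall r, kz < r < b -> goodb mem0 m r = false).
Proof.
  induction b.
  - left. split; auto. intros; lia.
  - simpl. destruct (goodb mem0 m b) eqn:G.
    + right. exists b. repeat split; auto; try lia.
    + destruct IHb as [[H1 H2]|[kz (H1&H2&H3&H4)]].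
      * left. split; auto. intros r Hr. destruct (Nat.eq_dec r b); [subst; auto|apply H2; lia].
      * right. exists kz. repeat split; auto; try lia.
        intros r Hr. destruct (Nat.eq_dec r b); [subst; auto|apply H4; lia].
Qed.

Lemma LList_frame mem mem' m p off h s : LList mem m p off h s ->
  (forall r, In r s -> mem' (p + 7 * r + off) = mem (p + 7 * r + off)) -> LList mem' m p off h s.
Proof.
  induction 1 as [|i s Hi Hl IH]; intros Hf; constructor; auto.
  rewrite Hf by (left; auto). apply IH. intros r Hr. apply Hf. right; auto.
Qed.

Definition LAof (f : nat -> nat) i j : list nat := rev (filter (fun r => f r =? S j) (seq 0 i)).

Lemma LAof_S f i j : LAof f (S i) j = if f i =? S j then i :: LAof f i j else LAof f i j.
Proof.
  unfold LAof. rewrite seq_S, filter_app. simpl. destruct (f i =? S j); simpl; rewrite ?app_nil_r; auto.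
  rewrite rev_app_distr. simpl. auto.
Qed.

Lemma LAof_in f i j r : In r (LAof f i j) <-> r < i /\ f r = S j.
Proof.
  unfold LAof. rewrite <- in_rev, filter_In, in_seq, Nat.eqb_eq. lia.
Qed.

Lemma LAof_nodup f i j : NoDup (LAof f i j).
Proof.
  unfold LAof. apply NoDup_rev. apply NoDup_filter. apply seq_NoDup.
Qed.

Definition outA mem0 m i : nat :=
  match mem0 (8 + 7 * i) with 0 => 0
  | S a => let N := nextFrom mem0 m a (m - a) in
      if N =? 0 then 0 else if N - (7 * mem0 (8 + 7 * i + 1) + 1) =? 0 then mem0 (N + 7 * m) else 0 end.

Definition outZ mem0 m i : nat :=
  match mem0 (8 + 7 * i) with 0 => 0
  | S a => let N := nextFrom mem0 m a (m - a) in
      if N =? 0 then 0 else if N - (7 * mem0 (8 + 7 * i + 1) + 1) =? 0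
        then mem0 (prevR mem0 m (mem0 (8 + 7 * i + 1)) + 7 * m + 1) else 0 end.

Definition VBound (mem0 : memory) m : Prop :=
  forall r, r < m -> mem0 (8 + 7 * r) <= m /\ mem0 (8 + 7 * r + 1) <= m.

Definition InvD mem0 m i (mem : memory) : Prop :=
  mem 0 = m /\ mem 1 = 7 * m /\ mem 2 = i /\ Inputs mem0 m mem /\
  (forall r, r < m -> mem (8 + 7 * r + 4) = prevR mem0 m (S r) /\
      mem (8 + 7 * r + 5) = nextFrom mem0 m r (m - r) /\ mem (8 + 14 * m + 7 * r + 2) = flagF mem0 m r) /\
  (forall r, r < i -> mem (8 + 14 * m + 7 * r) = outA mem0 m r /\ mem (8 + 14 * m + 7 * r + 1) = outZ mem0 m r) /\
  (forall j, j < m -> LList mem m (8 + 14 * m) 5 (mem (8 + 14 * m + 7 * j + 3)) (LAof (outA mem0 m) i j) /\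
                      LList mem m (8 + 14 * m) 6 (mem (8 + 14 * m + 7 * j + 4)) (LAof (outZ mem0 m) i j)).

Lemma initD mem0 m mem : InvC mem0 m m mem ->
  wp Prog 1 (112, mem) (fun s => fst s = 113 /\ InvD mem0 m 0 (snd s)).
Proof.
  intros (H0&H1&H2&H3&HI&HY&HN&HZ&HF).
  s1. apply wp_ret. split; [reflexivity|]. cbn [snd].
  unfold InvD. memsimp. regs. split; [auto|]. split; [auto|]. split; [lia|]. split; [|split; [|split]].
  - intros r o Hr Ho. memsimp. apply HI; auto.
  - intros r Hr. memsimp. split; [apply HY; auto|]. split; [apply HN; auto|apply HF; auto].
  - intros; lia.
  - intros j Hj. memsimp. destruct (HY j Hj) as (E3&E4&_). rewrite E3, E4. split; constructor.
Qed.

Definition Mid1 mem0 m i (mem : memory) (s : state) : Prop :=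
  fst s = 154 /\ snd s 0 = m /\ snd s 1 = 7 * m /\ snd s 2 = i /\ snd s 3 = outA mem0 m i /\
  snd s 4 = 7 * i + 8 /\ snd s 6 = outZ mem0 m i /\ forall x, 8 <= x -> snd s x = mem x.

Ltac finD1 := apply wp_ret; unfold Mid1; cbn [fst snd]; memsimp; regs;
  split; [reflexivity|]; split; [auto|]; split; [auto|]; split; [auto|];
  split; [auto|]; split; [lia|]; split; [auto|]; intros x Hx; memsimp; reflexivity.

Lemma seg1 mem0 m i mem : VBound mem0 m -> i < m -> InvD mem0 m i mem ->
  wp Prog 50 (113, mem) (Mid1 mem0 m i mem).
Proof.
  intros HVB Hi (H0&H1&H2&HI&HA&HO&HL).
  destruct (HVB i Hi) as [HB0 HB1].
  assert (EV0 : mem (7 * i + 8) = mem0 (8 + 7 * i)).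
  { replace (7 * i + 8) with (8 + 7 * i + 0) by lia. rewrite Nat.add_0_r.
    pose proof (proj1 (HI i 0 Hi ltac:(lia))) as E. rewrite Nat.add_0_r in E. exact E. }
  assert (EV1 : mem (7 * i + 8 + 1) = mem0 (8 + 7 * i + 1)).
  { replace (7 * i + 8 + 1) with (8 + 7 * i + 1) by lia. apply HI; lia. }
  s1. jzS. m7. s1. s1. s1.
  destruct (mem0 (8 + 7 * i)) as [|a] eqn:Ea.
  - assert (HoA : outA mem0 m i = 0) by (unfold outA; rewrite Ea; auto).
    assert (HoZ : outZ mem0 m i = 0) by (unfold outZ; rewrite Ea; auto).
    jz0. s1. s1. finD1.
  - assert (ENa : mem (7 * S a + 6) = nextFrom mem0 m a (m - a)).
    { rewrite <- (proj1 (proj2 (HA a ltac:(lia)))). f_equal. lia. }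
    jzS. m7. s1. s1. s1.
    destruct (nextFrom_spec mem0 m (m - a) a) as [[EN _]|[k1 (Hk1&Gk1&EN&Hmin)]].
    + assert (HoA : outA mem0 m i = 0) by (unfold outA; rewrite Ea; cbn zeta; rewrite EN; auto).
      assert (HoZ : outZ mem0 m i = 0) by (unfold outZ; rewrite Ea; cbn zeta; rewrite EN; auto).
      jz0. s1. s1. finD1.
    + jzS. s1. s1. s1. m7. s1. s1.
      destruct (Nat.eq_dec (8 + 7 * k1 - (7 * mem0 (8 + 7 * i + 1) + 1)) 0) as [Ec|Ec].
      * set (b1 := mem0 (8 + 7 * i + 1)) in *.
        assert (Hb1 : k1 < b1) by lia.
        destruct (prevR_spec mem0 m b1) as [[EP HP]|[kz (Hkz&Gkz&EP&Hmax)]].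
        { rewrite HP in Gk1; [discriminate|lia]. }
        assert (EW0 : mem (8 + 7 * k1 + 7 * m) = mem0 (8 + 7 * k1 + 7 * m)).
        { replace (8 + 7 * k1 + 7 * m) with (8 + 7 * m + 7 * k1 + 0) by lia. rewrite Nat.add_0_r.
          pose proof (proj2 (HI k1 0 ltac:(lia) ltac:(lia))) as E. rewrite Nat.add_0_r in E. exact E. }
        assert (EP4 : mem (7 * b1 + 1 + 4) = prevR mem0 m b1).
        { destruct b1 as [|b]; [lia|]. rewrite <- (proj1 (HA b ltac:(lia))). f_equal. lia. }
        assert (EW1 : mem (8 + 7 * kz + 7 * m + 1) = mem0 (8 + 7 * kz + 7 * m + 1)).
        { replace (8 + 7 * kz + 7 * m + 1) with (8 + 7 * m + 7 * kz + 1) by lia. rewrite (proj2 (HI kz 1 ltac:(lia) ltac:(lia))). reflexivity. }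
        assert (HoA : outA mem0 m i = mem0 (8 + 7 * k1 + 7 * m)).
        { unfold outA; rewrite Ea; cbn zeta; rewrite EN. fold b1. rewrite Ec. reflexivity. }
        assert (HoZ : outZ mem0 m i = mem0 (8 + 7 * kz + 7 * m + 1)).
        { unfold outZ; rewrite Ea; cbn zeta; rewrite EN. fold b1. rewrite Ec, EP. reflexivity. }
        rewrite EN in ENa. rewrite EP in EP4.
        jz0. rewrite ?EN. regs. s1. s1. s1. s1. s1. rewrite ?EP. regs. s1. s1. s1. s1. s1. rewrite ?EN, ?EP. finD1.
      * assert (HoA : outA mem0 m i = 0).
        { unfold outA; rewrite Ea; cbn zeta; rewrite EN. destruct (Nat.eqb_spec (8 + 7 * k1) 0); [lia|].
          destruct (Nat.eqb_spec (8 + 7 * k1 - (7 * mem0 (8 + 7 * i + 1) + 1)) 0); [lia|]. auto. }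
        assert (HoZ : outZ mem0 m i = 0).
        { unfold outZ; rewrite Ea; cbn zeta; rewrite EN. destruct (Nat.eqb_spec (8 + 7 * k1) 0); [lia|].
          destruct (Nat.eqb_spec (8 + 7 * k1 - (7 * mem0 (8 + 7 * i + 1) + 1)) 0); [lia|]. auto. }
        jzS. s1. s1. s1. finD1.
Qed.

Lemma LL_keep mem mem' m p off h s i : LList mem m p off h s -> (forall r, In r s -> r < i) ->
  (forall r, r < i -> mem' (p + 7 * r + off) = mem (p + 7 * r + off)) -> LList mem' m p off h s.
Proof. intros HL Hs Hf. apply (LList_frame mem); auto. Qed.

Lemma LAof_lt f i j r : In r (LAof f i j) -> r < i.
Proof. rewrite LAof_in. lia. Qed.

Lemma outA_zero mem0 m i : outA mem0 m i = 0 -> outZ mem0 m i = 0.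
Proof.
  unfold outA, outZ. destruct (mem0 (8 + 7 * i)) as [|a]; auto. cbn zeta.
  destruct (nextFrom_spec mem0 m (m - a) a) as [[EN _]|[k1 (Hk1&Gk1&EN&Hmin)]]; rewrite EN; auto.
  destruct (Nat.eqb_spec (8 + 7 * k1) 0); [lia|].
  destruct (Nat.eqb_spec (8 + 7 * k1 - (7 * mem0 (8 + 7 * i + 1) + 1)) 0); auto.
  intros H. unfold goodb in Gk1. apply andb_true_iff in Gk1. destruct Gk1 as [_ G].
  apply negb_true_iff, Nat.eqb_neq in G. exfalso. apply G. rewrite <- H. f_equal. lia.
Qed.

Ltac hfr HfrS := repeat match goal with |- context [?M ?x] => is_var M; rewrite (HfrS x) by lia end.

Ltac finD2 i HfrS HI HA HO EA EZ :=
    unfold InvD; memsimp; regs; hfr HfrS; split; [auto|]; split; [auto|]; split; [lia|]; split; [|split; [|split]];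
    [ intros r o Hr Ho; memsimp; hfr HfrS; apply HI; auto
    | intros r Hr; memsimp; hfr HfrS; apply HA; auto
    | intros r Hr; destruct (Nat.eq_dec r i) as [->|Hne];
      [ memsimp; rewrite EA, EZ; auto
      | memsimp; hfr HfrS; apply HO; lia ]
    | ].

Ltac keepL HfrS EZ L2 := rewrite LAof_S, EZ; cbn [Nat.eqb]; memsimp; hfr HfrS;
   (eapply LL_keep; [exact L2|intros r; apply LAof_lt|]);
   intros r Hr; memsimp; hfr HfrS; reflexivity.

Ltac pushL i m o ja j HfrS EA L1 := destruct (Nat.eq_dec j ja) as [->|Hne];
   [ rewrite LAof_S, EA, Nat.eqb_refl; memsimp; hfr HfrS; replace (i + 1) with (S i) by lia;
     constructor; [lia|]; memsimp; hfr HfrS;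
     match goal with |- LList _ _ _ _ (?M ?X) _ => is_var M; replace X with (8 + 14 * m + 7 * ja + o) by lia end;
     (eapply LL_keep; [exact L1|intros r; apply LAof_lt|]);
     intros r Hr; memsimp; hfr HfrS; reflexivity
   | rewrite LAof_S, EA; replace (S ja =? S j) with false by (symmetry; apply Nat.eqb_neq; lia);
     memsimp; hfr HfrS;
     (eapply LL_keep; [exact L1|intros r; apply LAof_lt|]);
     intros r Hr; memsimp; hfr HfrS; reflexivity ].

Lemma seg2 mem0 m i mem st : i < m -> outA mem0 m i <= m -> outZ mem0 m i <= m ->
  InvD mem0 m i mem -> Mid1 mem0 m i mem st ->
  wp Prog 40 st (fun s => fst s = 113 /\ InvD mem0 m (S i) (snd s)).
Proof.
  intros Hi HbA HbZ (H0&H1&H2&HI&HA&HO&HL) (Hpc&R0&R1&R2&R3&R4&R6&Hfr).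
  destruct st as [pc mem1]. cbn [fst snd] in *. subst pc.
  assert (HfrS : forall x, 8 <= x -> mem1 x = mem x) by exact Hfr. clear Hfr.
  s1. s1. s1. s1. s1. s1.
  destruct (outA mem0 m i) as [|ja] eqn:EA.
  - pose proof (outA_zero _ _ _ EA) as EZ. rewrite EZ in *.
    jz0. s1. s1. s1. apply wp_ret. split; [reflexivity|]. cbn [snd].
    unfold InvD. memsimp. regs. hfr HfrS. split; [auto|]. split; [auto|]. split; [lia|]. split; [|split; [|split]].
    + intros r o Hr Ho. memsimp. hfr HfrS. apply HI; auto.
    + intros r Hr. memsimp. hfr HfrS. apply HA; auto.
    + intros r Hr. destruct (Nat.eq_dec r i) as [->|Hne].
      * memsimp. rewrite EA, EZ. auto.
      * memsimp. hfr HfrS. apply HO; lia.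
    + intros j Hj. rewrite !LAof_S, EA, EZ. cbn [Nat.eqb]. memsimp. hfr HfrS.
      destruct (HL j Hj) as [L1 L2]. split; (eapply LL_keep; [eassumption|intros r; apply LAof_lt|]);
      intros r Hr; memsimp; hfr HfrS; reflexivity.
  - jzS. m7. s1. s1. s1. s1. s1. s1. s1. s1. s1. s1. s1.
    destruct (outZ mem0 m i) as [|jz] eqn:EZ.
    + jz0. s1. s1. s1. apply wp_ret. split; [reflexivity|]. cbn [snd].
      finD2 i HfrS HI HA HO EA EZ. intros j Hj. destruct (HL j Hj) as [L1 L2]. split.
      * pushL i m 3 ja j HfrS EA L1.
      * keepL HfrS EZ L2.
    + jzS. m7. s1. s1. s1. s1. s1. s1. s1. s1. s1. s1. s1. s1. apply wp_ret. split; [reflexivity|]. cbn [snd].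
      finD2 i HfrS HI HA HO EA EZ. intros j Hj. destruct (HL j Hj) as [L1 L2]. split.
      * pushL i m 3 ja j HfrS EA L1.
      * pushL i m 4 jz j HfrS EZ L2.
Qed.

Definition W1Bound (mem0 : memory) m : Prop :=
  forall r, r < m -> mem0 (8 + 7 * m + 7 * r + 1) <= m.

Lemma outA_bound mem0 m i : WBound mem0 m -> outA mem0 m i <= m.
Proof.
  intros HB. unfold outA. destruct (mem0 (8 + 7 * i)) as [|a]; [lia|]. cbn zeta.
  destruct (nextFrom_spec mem0 m (m - a) a) as [[EN _]|[k1 (Hk1&Gk1&EN&Hmin)]]; rewrite EN; [simpl; lia|].
  destruct (Nat.eqb_spec (8 + 7 * k1) 0); [lia|].
  destruct (_ =? 0); [|lia].
  replace (8 + 7 * k1 + 7 * m) with (8 + 7 * m + 7 * k1) by lia. apply HB. lia.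
Qed.

Lemma outZ_bound mem0 m i : i < m -> VBound mem0 m -> W1Bound mem0 m -> outZ mem0 m i <= m.
Proof.
  intros Hi HV HB. unfold outZ. destruct (HV i Hi) as [_ Hb1].
  destruct (mem0 (8 + 7 * i)) as [|a]; [lia|]. cbn zeta.
  destruct (nextFrom_spec mem0 m (m - a) a) as [[EN _]|[k1 (Hk1&Gk1&EN&Hmin)]]; rewrite EN; [simpl; lia|].
  destruct (Nat.eqb_spec (8 + 7 * k1) 0); [lia|].
  destruct (_ =? 0) eqn:Ec; [|lia]. apply Nat.eqb_eq in Ec.
  destruct (prevR_spec mem0 m (mem0 (8 + 7 * i + 1))) as [[EP HP]|[kz (Hkz&Gkz&EP&_)]]; rewrite EP.
  - rewrite HP in Gk1; [discriminate|lia].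
  - replace (8 + 7 * kz + 7 * m + 1) with (8 + 7 * m + 7 * kz + 1) by lia. apply HB. lia.
Qed.

Lemma bodyD mem0 m i mem : VBound mem0 m -> WBound mem0 m -> W1Bound mem0 m -> i < m -> InvD mem0 m i mem ->
  wp Prog (50 + 40) (113, mem) (fun s => fst s = 113 /\ InvD mem0 m (S i) (snd s)).
Proof.
  intros HV HW HW1 Hi HD. apply wp_seq. apply (wp_mono _ 50 50 _ (Mid1 mem0 m i mem)); [lia| |apply seg1; auto].
  intros st Hst. apply (seg2 mem0 m i mem); auto.
  - apply outA_bound; auto.
  - apply outZ_bound; auto.
Qed.

Lemma exitD mem0 m mem : InvD mem0 m m mem ->
  wp Prog 2 (113, mem) (fun s => fst s = 193 /\ InvD mem0 m m (snd s)).
Proof.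
  intros (H0&H1&H2&HI&HA&HO&HL).
  s1. jz0. apply wp_ret. split; [reflexivity|]. cbn [snd].
  unfold InvD. memsimp. regs. split; [auto|]. split; [auto|]. split; [lia|]. split; [|split; [|split]].
  - intros r o Hr Ho. memsimp. apply HI; auto.
  - intros r Hr. memsimp. apply HA; auto.
  - intros r Hr. memsimp. apply HO; auto.
  - intros j Hj. memsimp. destruct (HL j Hj) as [L1 L2].
    split; (eapply LL_keep; [eassumption|intros r; apply LAof_lt|]); intros r Hr; memsimp; reflexivity.
Qed.

Lemma phaseD mem0 m mem : VBound mem0 m -> WBound mem0 m -> W1Bound mem0 m -> InvC mem0 m m mem ->
  wp Prog (1 + ((50 + 40) * (m - 0) + 2)) (112, mem) (fun s => fst s = 193 /\ InvD mem0 m m (snd s)).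
Proof.
  intros HV HW HW1 HC. apply wp_seq. eapply (wp_mono _ 1 1); [lia| |apply (initD _ _ _ HC)].
  intros [pc mem'] [Hpc HI]. simpl in Hpc, HI. subst pc.
  apply (loop_gen Prog (InvD mem0 m) 113 m (50 + 40) 2); auto.
  - intros k mem'' Hk HI'. apply bodyD; auto.
  - intros. apply exitD; auto.
  - lia.
Qed.

Lemma whole mem0 m : mem0 0 = m -> VBound mem0 m -> WBound mem0 m -> W1Bound mem0 m ->
  exists t mem', t <= 300 * (m + 1) /\ halts_in Prog mem0 t mem' /\ InvD mem0 m m mem'.
Proof.
  intros H0 HV HW HW1.
  assert (Hw : wp Prog ((10 + (40 * (m - 0) + 2)) + ((3 + (40 * (m - 0) + 1)) + ((2 + (40 * (m - 0) + 2)) +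
                (1 + ((50 + 40) * (m - 0) + 2))))) (0, mem0) (fun s => fst s = 193 /\ InvD mem0 m m (snd s))).
  { apply wp_seq. eapply wp_mono; [reflexivity| |apply (phaseA _ _ H0)].
    intros [pc mem1] [Hpc HA]. simpl in Hpc, HA. subst pc.
    apply wp_seq. eapply wp_mono; [reflexivity| |apply (phaseB _ _ _ HW HA)].
    intros [pc mem2] [Hpc HB]. simpl in Hpc, HB. subst pc.
    apply wp_seq. eapply wp_mono; [reflexivity| |apply (phaseC _ _ _ HB)].
    intros [pc mem3] [Hpc HC]. simpl in Hpc, HC. subst pc.
    apply phaseD; auto. }
  destruct Hw as (t&[pc mem']&Ht&Hr&Hpc&HD). simpl in Hpc, HD. subst pc.
  exists t, mem'. split; [lia|]. split; auto.
  exists 193. split; auto.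
Qed.

Lemma goodb_good mem0 m k : k < m -> (goodb mem0 m k = true <-> good mem0 m k).
Proof.
  intros Hk. unfold goodb, good. rewrite andb_true_iff, !negb_true_iff, !Nat.eqb_neq. tauto.
Qed.

Lemma ZF_spec mem0 m x y d : forall k,
  (y < ZF mem0 m k d x <-> exists k', k <= k' < k + d /\ goodb mem0 m k' = true /\
      mem0 (8 + 7 * m + 7 * k') = S x /\ y < mem0 (8 + 7 * m + 7 * k' + 1)).
Proof.
  induction d; intros k; cbn [ZF].
  - split; [lia|]. intros (k'&?&_). lia.
  - rewrite Nat.max_lt_iff, IHd. split.
    + intros [(k'&H1&H2&H3&H4)|H].
      * exists k'. repeat split; auto; lia.
      * destruct (goodb mem0 m k) eqn:G; [|simpl in H; lia].
        destruct (Nat.eqb_spec (mem0 (8 + 7 * m + 7 * k)) (S x)); [|simpl in H; lia].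
        simpl in H. exists k. repeat split; auto; lia.
    + intros (k'&H1&H2&H3&H4). destruct (Nat.eq_dec k' k) as [->|Hne].
      * right. rewrite H2, H3, Nat.eqb_refl. simpl. auto.
      * left. exists k'. repeat split; auto; lia.
Qed.

Lemma runC_spec mem0 m y j : y < runC mem0 m j <-> exists x, x < j /\ y < ZF mem0 m 0 m x.
Proof.
  induction j; cbn [runC].
  - split; [lia|]. intros (x&?&_); lia.
  - rewrite Nat.max_lt_iff, IHj. split.
    + intros [(x&H1&H2)|H]; [exists x; split; auto; lia|exists j; split; auto].
    + intros (x&H1&H2). destruct (Nat.eq_dec x j) as [->|]; [right; auto|left; exists x; split; auto; lia].
Qed.

Lemma flag_correct M m n s1 s2 s3 mem0 r :
  s1 <= s2 -> s2 <= s3 -> EncPhi mem0 8 M m n s1 s2 -> EncPhi mem0 (8 + 7 * m) M m n s2 s3 -> r < m ->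
  (flagF mem0 m r = 1 /\ exists i, i < m /\ reach M m n i s1 r s3) \/
  (flagF mem0 m r = 0 /\ ~ exists i, i < m /\ reach M m n i s1 r s3).
Proof.
  intros H1 H2 HV HW Hr. rewrite (Y_flag M m n s1 s2 s3 mem0 r); auto.
  assert (Hc : r < runC mem0 m (S r) <-> exists k, good mem0 m k /\
     mem0 (8 + 7 * m + 7 * k) <= S r /\ S r <= mem0 (8 + 7 * m + 7 * k + 1)).
  { rewrite runC_spec. split.
    - intros (x&Hx&Hz). rewrite ZF_spec in Hz. destruct Hz as (k&Hk&G&E0&E1).
      exists k. rewrite <- goodb_good by lia. repeat split; auto; lia.
    - intros (k&G&E0&E1). pose proof G as G'. destruct G' as (Hk&_&Hnz).
      rewrite <- goodb_good in G by auto.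
      destruct (mem0 (8 + 7 * m + 7 * k)) as [|x] eqn:Ex; [lia|].
      exists x. split; [lia|]. rewrite ZF_spec. exists k. repeat split; auto; lia. }
  unfold flagF. destruct (Nat.eqb_spec (runC mem0 m (S r) - r) 0) as [E|E].
  - right. split; auto. intros [_ Hx]. apply Hc in Hx. lia.
  - destruct (Nat.eqb_spec (mem0 (8 + 7 * m + 7 * r + 2)) 0) as [E2|E2].
    + right. split; auto. intros [Hx _]. auto.
    + left. split; auto. split; auto. apply Hc. lia.
Qed.

Lemma opt_none_A M m n lo hi i : (forall j, ~ reach M m n i lo j hi) -> OptEnc (SigmaA M m n lo hi i) 0.
Proof. intros H. left. split; auto. intros j (_&Hr&_). eapply H; eauto. Qed.
Lemma opt_none_Z M m n lo hi i : (forall j, ~ reach M m n i lo j hi) -> OptEnc (SigmaZ M m n lo hi i) 0.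
Proof. intros H. left. split; auto. intros j (_&Hr&_). eapply H; eauto. Qed.

Lemma out_correct M m n s1 s2 s3 mem0 r :
  s1 <= s2 -> s2 <= s3 -> EncPhi mem0 8 M m n s1 s2 -> EncPhi mem0 (8 + 7 * m) M m n s2 s3 -> r < m ->
  OptEnc (SigmaA M m n s1 s3 r) (outA mem0 m r) /\ OptEnc (SigmaZ M m n s1 s3 r) (outZ mem0 m r).
Proof.
  intros H1 H2 HV HW Hr. unfold outA, outZ.
  destruct (mem0 (8 + 7 * r)) as [|a] eqn:Ea.
  - pose proof (Y_none M m n s1 s2 s3 mem0 r H1 H2 HV Hr Ea). split; [apply opt_none_A|apply opt_none_Z]; auto.
  - pose proof (enc_AS _ _ _ _ _ _ _ _ _ HV Hr Ea) as SA.
    destruct (enc_Z_ex _ _ _ _ _ _ _ _ _ HV Hr (proj1 (proj2 SA))) as [b [Eb SZ]].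
    assert (Hab : a <= b) by (apply (reach_interval M m n s1 s2 r a b a SA SZ), SA).
    assert (Hbm : b < m) by (destruct SZ; lia).
    cbn zeta. rewrite Eb.
    destruct (nextFrom_spec mem0 m (m - a) a) as [[EN HN]|[k1 (Hk1&Gk1&EN&Hmin)]]; rewrite EN.
    + assert (Hno : forall j, ~ reach M m n r s1 j s3).
      { apply (Y_empty M m n s1 s2 s3 mem0 r a b); auto. intros k Hk G.
        rewrite <- goodb_good in G by lia. rewrite HN in G; [discriminate|lia]. }
      simpl. split; [apply opt_none_A|apply opt_none_Z]; auto.
    + destruct (Nat.eqb_spec (8 + 7 * k1) 0); [lia|].
      destruct (Nat.eqb_spec (8 + 7 * k1 - (7 * S b + 1)) 0) as [Ec|Ec].
      * assert (Gk1' : good mem0 m k1) by (apply goodb_good; auto; lia).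
        assert (Hmin' : forall k, a <= k < k1 -> ~ good mem0 m k).
        { intros k Hk G. rewrite <- goodb_good in G by lia. rewrite Hmin in G; [discriminate|lia]. }
        destruct (prevR_spec mem0 m (S b)) as [[EP HP]|[kz (Hkz&Gkz&EP&Hmax)]].
        { rewrite HP in Gk1; [discriminate|lia]. }
        rewrite EP.
        assert (Hk1kz : k1 <= kz) by (destruct (le_lt_dec k1 kz); auto; rewrite Hmax in Gk1; [discriminate|lia]).
        assert (Gkz' : good mem0 m kz) by (apply goodb_good; auto; lia).
        destruct Gk1' as (_&_&NZ1). pose proof Gkz' as (_&_&NZz).
        destruct (mem0 (8 + 7 * m + 7 * k1)) as [|x] eqn:Ex; [lia|].
        split.
        -- right. exists x. split; [replace (8 + 7 * k1 + 7 * m) with (8 + 7 * m + 7 * k1) by lia; exact Ex|].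
           apply (Y_A M m n s1 s2 s3 mem0 r a b k1 x); auto; [lia|apply goodb_good; auto; lia].
        -- destruct (mem0 (8 + 7 * m + 7 * kz)) as [|x'] eqn:Ex'; [lia|].
           destruct (enc_Z_ex _ _ _ _ _ _ _ _ _ HW (proj1 Gkz') (proj1 (proj2 (enc_AS _ _ _ _ _ _ _ _ _ HW (proj1 Gkz') Ex'))))
             as [z [Ez _]].
           right. exists z. split.
           ++ replace (8 + 7 * kz + 7 * m + 1) with (8 + 7 * m + 7 * kz + 1) by lia. auto.
           ++ apply (Y_Z M m n s1 s2 s3 mem0 r a b kz z); auto; try lia.
              intros k Hk G. rewrite <- goodb_good in G by lia. rewrite Hmax in G; [discriminate|lia].
      * assert (Hno : forall j, ~ reach M m n r s1 j s3).
        { apply (Y_empty M m n s1 s2 s3 mem0 r a b); auto. intros k Hk G.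
          rewrite <- goodb_good in G by lia. rewrite Hmin in G; [discriminate|lia]. }
        split; [apply opt_none_A|apply opt_none_Z]; auto.
Qed.

Lemma listenc_gen mem m p off head f (R : nat -> nat -> Prop) (Mi : nat -> Prop) r :
  LList mem m p off (mem head) (LAof f m r) ->
  (forall i, i < m -> OptEnc (R i) (f i)) -> (forall i j j', R i j -> R i j' -> j = j') ->
  (forall i j, R i j -> Mi i) ->
  ListEnc mem m p off head (fun i => i < m /\ Mi i /\ R i r).
Proof.
  intros HL HO HU HM. exists (LAof f m r). split; [auto|]. split; [apply LAof_nodup|].
  intros i. rewrite LAof_in. split.
  - intros [Hi Hf]. destruct (HO i Hi) as [[E _]|[j [E HR]]]; [lia|].
    rewrite Hf in E. injection E; intros; subst. repeat split; eauto.
  - intros (Hi&_&HR). split; auto. destruct (HO i Hi) as [[E HN]|[j [E HR']]].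
    + exfalso. eapply HN; eauto.
    + rewrite E. f_equal. eapply HU; eauto.
Qed.

Theorem lemma5 :
  exists (P : list instr) (c : nat),
    forall (m n : nat) (M : nat -> nat -> bool) (s1 s2 s3 : nat),
      s1 <= s2 -> s2 <= s3 -> s3 < n ->
      forall mem0 : memory,
        mem0 0 = m ->
        EncPhi mem0 8 M m n s1 s2 ->
        EncPhi mem0 (8 + 7 * m) M m n s2 s3 ->
        exists t mem',
          t <= c * (m + 1) /\ halts_in P mem0 t mem' /\
          EncPhi mem' (8 + 14 * m) M m n s1 s3.
Proof.
  exists Prog, 300. intros m n M s1 s2 s3 H12 H23 Hn mem0 H0 HV HW.
  assert (Bnd : forall p lo hi r v, EncPhi mem0 p M m n lo hi -> r < m ->
     (OptEnc (SigmaA M m n lo hi r) v \/ OptEnc (SigmaZ M m n lo hi r) v) -> v <= m).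
  { intros p lo hi r v _ Hr [HH|HH]; destruct HH as [[E _]|[j [E (Hj&_)]]]; lia. }
  assert (HVB : VBound mem0 m).
  { intros r Hr. destruct (HV r Hr) as (A&Z&_). split; [apply (Bnd _ _ _ r _ HV Hr); left; exact A|apply (Bnd _ _ _ r _ HV Hr); right; exact Z]. }
  assert (HWB : WBound mem0 m).
  { intros r Hr. destruct (HW r Hr) as (A&Z&_). apply (Bnd _ _ _ r _ HW Hr); left; exact A. }
  assert (HW1B : W1Bound mem0 m).
  { intros r Hr. destruct (HW r Hr) as (A&Z&_). apply (Bnd _ _ _ r _ HW Hr); right; exact Z. }
  destruct (whole mem0 m H0 HVB HWB HW1B) as (t&mem'&Ht&Hh&HD).
  exists t, mem'. split; [auto|]. split; [auto|].
  destruct HD as (_&_&_&_&HA&HO&HL).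
  intros r Hr. destruct (HO r Hr) as [EA EZ]. rewrite EA, EZ.
  destruct (out_correct M m n s1 s2 s3 mem0 r H12 H23 HV HW Hr) as [OA OZ].
  split; [auto|]. split; [auto|]. split.
  - destruct (HA r Hr) as (_&_&EF). rewrite EF. apply (flag_correct M m n s1 s2 s3); auto.
  - destruct (HL r Hr) as [L1 L2]. split.
    + apply (listenc_gen mem' m (8 + 14 * m) 5 _ (outA mem0 m) (SigmaA M m n s1 s3) (fun i => M i s1 = true)); auto.
      * intros i Hi. apply out_correct with s2; auto.
      * intros i j j'. apply SigmaA_unique.
      * intros i j (_&Hr'&_). apply (reach_props _ _ _ _ _ _ _ Hr').
    + apply (listenc_gen mem' m (8 + 14 * m) 6 _ (outZ mem0 m) (SigmaZ M m n s1 s3) (fun i => M i s1 = true)); auto.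
      * intros i Hi. apply out_correct with s2; auto.
      * intros i j j'. apply SigmaZ_unique.
      * intros i j (_&Hr'&_). apply (reach_props _ _ _ _ _ _ _ Hr').
Qed.
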